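(* Let $L=\langle S,A,\to\rangle$ be a labelled transition system and $x,y\in\{o,b\}$. Then $(x,y)$-generic bisimilarity $\mathrel{\underline{\leftrightarrow}}_{(x,y)}$ is an equivalence relation on $S$.
   Context: An LTS is $\langle S,A,\to\rangle$ with states $S$, actions $A$ containing the internal action $\tau$, and $\to\subseteq S\times A\times S$; write $s\xrightarrow{a}t$, and $\twoheadrightarrow$ for the reflexive-transitive closure of $\xrightarrow{\tau}$. For $R\subseteq S\times S$ and $s,s',t$: $s\twoheadrightarrow_{o,R,t}s'$ iff $s\twoheadrightarrow s'$; $s\twoheadrightarrow_{b,R,t}s'$ iff $s\twoheadrightarrow s'$, $t\,R\,s$ and $t\,R\,s'$. For $x,y\in\{o,b\}$, a symmetric $R$ is an $(x,y)$-generic bisimulation if whenever $s\,R\,t$ and $s\xrightarrow{a}s'$, either $a=\tau$ and $s'\,R\,t$, or there exist $t',t_1,t_2$ with $t\twoheadrightarrow_{x,R,s}t_1\xrightarrow{a}t_2\twoheadrightarrow_{y,R,s'}t'$ and $s'\,R\,t'$. $s\mathrel{\underline{\leftrightarrow}}_{(x,y)}t$ iff some $(x,y)$-generic bisimulation relates $s$ and $t$. *)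

(* Defs.v *)
From Stdlib Require Import Relations RelationClasses Relation_Operators.

Set Implicit Arguments.

Record LTS := {
  St : Type;
  Act : Type;
  tau : Act;
  step : St -> Act -> St -> Prop
}.

(* The two kinds of tau-paths: o (unrestricted) and b (branching). *)
Inductive kind := o | b.

Section Generic.
Variable L : LTS.

Definition tau_steps : St L -> St L -> Prop :=
  clos_refl_trans (St L) (fun s s' => step L s (tau L) s').

Definition kpath (x : kind) (R : St L -> St L -> Prop) (t s s' : St L) : Prop :=
  match x with
  | o => tau_steps s s'
  | b => tau_steps s s' /\ R t s /\ R t s'
  end.

Definition generic_bisim (x y : kind) (R : St L -> St L -> Prop) : Prop :=
  (forall s t, R s t -> R t s) /\
  (forall s t a s', R s t -> step L s a s' ->
     (a = tau L /\ R s' t) \/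
     (exists t' t1 t2, kpath x R s t t1 /\ step L t1 a t2 /\
                       kpath y R s' t2 t' /\ R s' t')).

Definition generic_bisimilar (x y : kind) (s t : St L) : Prop :=
  exists R, generic_bisim x y R /\ R s t.

End Generic.

(* Main.v *)
Require Import Defs.
From Stdlib Require Import RelationClasses.
From Stdlib Require Import Relations Relation_Operators Operators_Properties.

Section Proof.
Variable L : LTS.
Variables x y : kind.

Lemma kpath_intro k (R : St L -> St L -> Prop) t s s' :
  tau_steps L s s' -> (k = b -> R t s /\ R t s') -> kpath L k R t s s'.
Proof. destruct k; simpl; intuition. Qed.

Lemma kpath_elim k (R : St L -> St L -> Prop) t s s' :
  kpath L k R t s s' -> tau_steps L s s' /\ (k = b -> R t s /\ R t s').
Proof. destruct k; simpl; intuition discriminate. Qed.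

Lemma kpath_mono k (R R' : St L -> St L -> Prop) t s s' :
  (forall u v, R u v -> R' u v) -> kpath L k R t s s' -> kpath L k R' t s s'.
Proof. intros H Hk. apply kpath_elim in Hk. destruct Hk as [H1 H2].
  apply kpath_intro; auto. intro e. destruct (H2 e); auto. Qed.

Definition semi_bisim (R : St L -> St L -> Prop) : Prop :=
  (forall s t, R s t -> R t s) /\
  (forall s t a s', R s t -> step L s a s' ->
     (a = tau L /\ exists t1 t', kpath L x R s t t1 /\ kpath L y R s' t1 t' /\ R s' t') \/
     (exists t' t1 t2, kpath L x R s t t1 /\ step L t1 a t2 /\
                       kpath L y R s' t2 t' /\ R s' t')).

Definition SB s t := exists R, semi_bisim R /\ R s t.

Lemma SB_max R s t : semi_bisim R -> R s t -> SB s t.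
Proof. intros; exists R; auto. Qed.

Lemma SB_sym s t : SB s t -> SB t s.
Proof. intros [R [[Hs Hm] H]]. exists R; split; [split|]; auto. Qed.

Lemma SB_semi : semi_bisim SB.
Proof.
  split; [exact SB_sym|].
  intros s t a s' [R [HR Hst]] Hstep.
  assert (Hm : forall u v, R u v -> SB u v) by (intros; exists R; auto).
  destruct HR as [Hs Hc].
  destruct (Hc _ _ _ _ Hst Hstep) as [[Ha [t1 [t' [K1 [K2 K3]]]]] | [t' [t1 [t2 [K1 [K2 [K3 K4]]]]]]].
  - left. split; auto. exists t1, t'. split; [|split]; eauto using kpath_mono.
  - right. exists t', t1, t2. split; [|split; [|split]]; eauto using kpath_mono.
Qed.

Lemma transfer R s s1 t : semi_bisim R -> tau_steps L s s1 -> R s t ->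
  exists t1, tau_steps L t t1 /\ R s1 t1.
Proof.
  intros HR Hp. apply clos_rt_rt1n_iff in Hp. revert t.
  induction Hp as [s|s m s1 Hsm Hp IH]; intros t Hst.
  - exists t; split; auto. apply rt_refl.
  - destruct HR as [Hs Hc].
    destruct (Hc _ _ _ _ Hst Hsm) as [[_ [t1 [t' [K1 [K2 K3]]]]] | [t' [t1 [t2 [K1 [K2 [K3 K4]]]]]]].
    + destruct (IH _ K3) as [t2 [P1 P2]]. exists t2; split; auto.
      apply kpath_elim in K1. apply kpath_elim in K2.
      eapply rt_trans; [apply K1|]. eapply rt_trans; [apply K2|]. exact P1.
    + destruct (IH _ K4) as [t3 [P1 P2]]. exists t3; split; auto.
      apply kpath_elim in K1. apply kpath_elim in K3.
      eapply rt_trans; [apply K1|]. eapply rt_trans; [apply rt_step, K2|].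
      eapply rt_trans; [apply K3|]. exact P1.
Qed.

Arguments transfer [R s s1 t].
Arguments SB_max [R s t].

Definition SS s t := exists u, SB s u /\ SB u t.

Lemma SS_semi : semi_bisim SS.
Proof.
  split.
  - intros s t [u [H1 H2]]. exists u; split; apply SB_sym; auto.
  - intros s t a s' [u [Hsu Hut]] Hstep.
    destruct SB_semi as [Hs Hc].
    destruct (Hc _ _ _ _ Hsu Hstep) as [[Ha [u1 [u' [K1 [K2 K3]]]]] | [u' [u1 [u2 [K1 [K2 [K3 K4]]]]]]].
    + apply kpath_elim in K1. destruct K1 as [P1 Q1].
      apply kpath_elim in K2. destruct K2 as [P2 Q2].
      destruct (transfer SB_semi P1 Hut) as [t1 [T1 H1]].
      destruct (transfer SB_semi P2 H1) as [t2 [T2 H2]].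
      left; split; auto. exists t1, t2. split; [|split].
      * apply kpath_intro; auto. intro e; destruct (Q1 e).
        split; [exists u|exists u1]; auto.
      * apply kpath_intro; auto. intro e; destruct (Q2 e).
        split; [exists u1|exists u']; auto.
      * exists u'; auto.
    + apply kpath_elim in K1. destruct K1 as [P1 Q1].
      apply kpath_elim in K3. destruct K3 as [P3 Q3].
      destruct (transfer SB_semi P1 Hut) as [t1 [T1 H1]].
      destruct (Hc _ _ _ _ H1 K2) as [[Ha [t2 [t3 [J1 [J2 J3]]]]] | [t4 [t2 [t3 [J1 [J2 [J3 J4]]]]]]].
      * apply kpath_elim in J1. destruct J1 as [R1 S1].
        apply kpath_elim in J2. destruct J2 as [R2 S2].
        destruct (transfer SB_semi P3 J3) as [t4 [T4 H4]].
        left; split; auto. exists t2, t4. split; [|split].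
        -- apply kpath_intro; [eapply rt_trans; eauto|]. intro e; destruct (Q1 e), (S1 e).
           split; [exists u|exists u1]; auto.
        -- apply kpath_intro; [eapply rt_trans; eauto|]. intro e; destruct (Q3 e), (S2 e).
           split; [exists u2|exists u']; auto.
        -- exists u'; auto.
      * apply kpath_elim in J1. destruct J1 as [R1 S1].
        apply kpath_elim in J3. destruct J3 as [R3 S3].
        destruct (transfer SB_semi P3 J4) as [t5 [T5 H5]].
        right. exists t5, t2, t3. split; [|split; [|split]]; auto.
        -- apply kpath_intro; [eapply rt_trans; eauto|]. intro e; destruct (Q1 e), (S1 e).
           split; [exists u|exists u1]; auto.
        -- apply kpath_intro; [eapply rt_trans; eauto|]. intro e; destruct (Q3 e), (S3 e).
           split; [exists u2|exists u']; auto.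
        -- exists u'; auto.
Qed.

Lemma SB_trans s u t : SB s u -> SB u t -> SB s t.
Proof. intros. apply (SB_max SS_semi). exists u; auto. Qed.

Definition Rst a c :=
  SB a c \/
  (exists r0 rn, tau_steps L r0 a /\ tau_steps L a rn /\ SB r0 c /\ SB rn c) \/
  (exists r0 rn, tau_steps L r0 c /\ tau_steps L c rn /\ SB r0 a /\ SB rn a).

Lemma Rst_semi : semi_bisim Rst.
Proof.
  assert (Hm : forall u v, SB u v -> Rst u v) by (intros; left; auto).
  destruct SB_semi as [Hs Hc].
  split.
  - intros s t [H|[H|H]]; [left; auto|right; right; auto|right; left; auto].
  - intros s t a s' H Hstep. destruct H as [H|[[r0 [rn [P0 [Pn [H0 Hn]]]]]|[r0 [rn [P0 [Pn [H0 Hn]]]]]]].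
    + destruct (Hc _ _ _ _ H Hstep) as [[Ha [t1 [t' [K1 [K2 K3]]]]] | [t' [t1 [t2 [K1 [K2 [K3 K4]]]]]]].
      * left. split; auto. exists t1, t'. split; [|split]; eauto using kpath_mono.
      * right. exists t', t1, t2. split; [|split; [|split]]; eauto using kpath_mono.
    +
      destruct (transfer SB_semi P0 H0) as [q1 [Q1 G1]].
      assert (Hsq : Rst s t) by (right; left; exists r0, rn; auto).
      destruct (Hc _ _ _ _ G1 Hstep) as [[Ha [t1 [t' [K1 [K2 K3]]]]] | [t' [t1 [t2 [K1 [K2 [K3 K4]]]]]]].
      * apply kpath_elim in K1. destruct K1 as [R1 S1].
        left. split; auto. exists t1, t'. split; [|split]; eauto using kpath_mono.
        apply kpath_intro; [eapply rt_trans; eauto|]. intro e; destruct (S1 e); auto.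
      * apply kpath_elim in K1. destruct K1 as [R1 S1].
        right. exists t', t1, t2. split; [|split; [|split]]; eauto using kpath_mono.
        apply kpath_intro; [eapply rt_trans; eauto|]. intro e; destruct (S1 e); auto.
    +
      assert (Hsq : Rst s t) by (right; right; exists r0, rn; auto).
      destruct (Hc _ _ _ _ (Hs _ _ Hn) Hstep) as [[Ha [t1 [t' [K1 [K2 K3]]]]] | [t' [t1 [t2 [K1 [K2 [K3 K4]]]]]]].
      * apply kpath_elim in K1. destruct K1 as [R1 S1].
        left. split; auto. exists t1, t'. split; [|split]; eauto using kpath_mono.
        apply kpath_intro; [eapply rt_trans; eauto|]. intro e; destruct (S1 e); auto.
      * apply kpath_elim in K1. destruct K1 as [R1 S1].
        right. exists t', t1, t2. split; [|split; [|split]]; eauto using kpath_mono.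
        apply kpath_intro; [eapply rt_trans; eauto|]. intro e; destruct (S1 e); auto.
Qed.

Lemma stutter q r0 w rn : SB q r0 -> SB q rn -> tau_steps L r0 w -> tau_steps L w rn -> SB q w.
Proof.
  intros H0 Hn P0 Pn. apply (SB_max Rst_semi). right; right.
  exists r0, rn; repeat split; auto; apply SB_sym; auto.
Qed.

Lemma last_step s s' : tau_steps L s s' ->
  s = s' \/ exists s0, tau_steps L s s0 /\ step L s0 (tau L) s'.
Proof.
  intro H. apply clos_rt_rtn1_iff in H. destruct H as [|m z Hm Hp].
  - left; auto.
  - right. exists m; split; auto. apply clos_rt_rtn1_iff; auto.
Qed.

Lemma first_step s s' : tau_steps L s s' ->
  s = s' \/ exists s0, step L s (tau L) s0 /\ tau_steps L s0 s'.
Proof.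
  intro H. apply clos_rt_rt1n_iff in H. destruct H as [|m z Hm Hp].
  - left; auto.
  - right. exists m; split; auto. apply clos_rt_rt1n_iff; auto.
Qed.

Arguments last_step [s s'].
Arguments first_step [s s'].

Lemma SB_generic : generic_bisim L x y SB.
Proof.
  destruct SB_semi as [Hs Hc]. split; auto.
  intros s t a s' H Hstep.
  destruct (Hc _ _ _ _ H Hstep) as [[Ha [t1 [t' [K1 [K2 K3]]]]] | K]; [|right; exact K].
  subst a.
  apply kpath_elim in K1. destruct K1 as [P1 Q1].
  apply kpath_elim in K2. destruct K2 as [P2 Q2].
  destruct (first_step P2) as [E|[t1a [St1 Pa]]].
  - subst t'. destruct (last_step P1) as [E|[t0 [P0 St0]]].
    + subst t1. left; auto.
    + right. exists t1, t0, t1. split; [|split; [|split]]; auto.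
      * apply kpath_intro; auto. intro e; destruct (Q1 e); split; auto.
        apply stutter with (r0:=t) (rn:=t1); auto. apply rt_step; auto.
      * apply kpath_intro; [apply rt_refl|]. intro e; destruct (Q2 e); auto.
  - right. exists t', t1, t1a. split; [|split; [|split]]; auto.
    + apply kpath_intro; auto.
    + apply kpath_intro; auto. intro e; destruct (Q2 e); split; auto.
      apply stutter with (r0:=t1) (rn:=t'); auto. apply rt_step; auto.
Qed.

Lemma generic_to_SB s t : generic_bisimilar L x y s t -> SB s t.
Proof.
  intros [R [[Hs Hc] H]]. exists R; split; auto. split; auto.
  intros s0 t0 a s' H0 Hst.
  destruct (Hc _ _ _ _ H0 Hst) as [[Ha HR]|K]; [|right; exact K].
  left; split; auto. exists t0, t0. split; [|split]; auto.
  - apply kpath_intro; [apply rt_refl|]. auto.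
  - apply kpath_intro; [apply rt_refl|]. auto.
Qed.

End Proof.

Theorem corollary4p7 (L : LTS) (x y : kind) :
  Equivalence (generic_bisimilar L x y).
Proof.
  split.
  - intro s. exists (@eq (St L)). split; auto. split.
    + intros; subst; auto.
    + intros s0 t a s' E Hs; subst t. right. exists s', s0, s'.
      split; [|split; [|split]]; auto.
      * apply kpath_intro; [apply rt_refl|]; auto.
      * apply kpath_intro; [apply rt_refl|]; auto.
  - intros s t [R [[Hs Hc] H]]. exists R; split; [split|]; auto.
  - intros s u t H1 H2. exists (SB L x y). split; [apply SB_generic|].
    eapply SB_trans; eapply generic_to_SB; eauto.
Qed.
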